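(* Let $\mathcal K$ be a 2-category, let $(V,\psi),(W,\phi):(t,\mu,\eta)\to(t',\mu',\eta')$ be 1-cells in $\mathrm{EM}^w(\mathcal K)$ and let $\omega:V\Rightarrow W$ be a 2-cell in $\mathcal K$. (1) The following are equivalent: (i) $\omega t\ast\psi\ast\eta'V$ is a 2-cell $(V,\psi)\Rightarrow(W,\phi)$ in $\mathrm{EM}^w(\mathcal K)$; (ii) $\omega t\ast\psi=W\mu\ast\phi t\ast t'\omega t\ast t'\psi\ast t'\eta'V$; (iii) $W\mu\ast\phi t\ast\eta'Wt\ast\omega t\ast\psi\ast\eta'V=\omega t\ast\psi\ast\eta'V$ and $W\mu\ast\phi t\ast\eta'Wt\ast\omega t\ast\psi=W\mu\ast\phi t\ast t'\omega t\ast t'\psi\ast t'\eta'V$. (2) The following are equivalent: (i) $\phi\ast\eta'W\ast\omega$ is a 2-cell $(V,\psi)\Rightarrow(W,\phi)$ in $\mathrm{EM}^w(\mathcal K)$; (ii) $\phi\ast t'\omega=W\mu\ast\phi t\ast\eta'Wt\ast\omega t\ast\psi$; (iii) $W\mu\ast\phi t\ast\eta'Wt\ast\omega t\ast\psi\ast\eta'V=\phi\ast\eta'W\ast\omega$ and $W\mu\ast\phi t\ast\eta'Wt\ast\omega t\ast\psi=W\mu\ast\phi t\ast t'\omega t\ast t'\psi\ast t'\eta'V$. (3) The following are equivalent: (i) $\phi\ast t'\omega=\omega t\ast\psi$; (ii) both $\phi\ast\eta'W\ast\omega$ and $\omega t\ast\psi\ast\eta'V$ are 2-cells $(V,\psi)\Rightarrow(W,\phi)$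 in $\mathrm{EM}^w(\mathcal K)$. Moreover, when these hold, $\phi\ast\eta'W\ast\omega=\omega t\ast\psi\ast\eta'V$.
   Context: Conventions in a 2-category $\mathcal K$: horizontal composition and whiskering by juxtaposition in the order of functor composition ($V:k\to k'$, $V':k'\to k''$ give $V'V$); identity 1-cell of $k$ written $k$, identity 2-cell of $V$ written $V$; vertical composition $\ast$ with $\alpha\ast\beta$ meaning $\beta$ then $\alpha$. A monad $(t,\mu,\eta)$ on $k$: $t:k\to k$, $\mu:tt\Rightarrow t$, $\eta:k\Rightarrow t$, $\mu\ast\mu t=\mu\ast t\mu$, $\mu\ast\eta t=t=\mu\ast t\eta$. The 2-category $\mathrm{EM}^w(\mathcal K)$: 0-cells are monads in $\mathcal K$; a 1-cell $(t,\mu,\eta)\to(t',\mu',\eta')$ ($t$ on $k$, $t'$ on $k'$) is a pair $(V,\psi)$, $V:k\to k'$, $\psi:t'V\Rightarrow Vt$, with $V\mu\ast\psi t\ast t'\psi=\psi\ast\mu'V$; a 2-cell $(V,\psi)\Rightarrow(W,\phi)$ is a 2-cell $\varrho:V\Rightarrow Wt$ of $\mathcal K$ with (a) $W\mu\ast\varrho t\ast\psi=W\mu\ast\phi t\ast t'\varrho$ and (b) $\varrho=W\mu\ast\phi t\ast\eta'Wt\ast\varrho$. *)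

(* Defs.v *)
Set Implicit Arguments.
Unset Strict Implicit.

Record TwoCatData := {
  Obj : Type;
  Hom : Obj -> Obj -> Type;
  Cell : forall a b : Obj, Hom a b -> Hom a b -> Type;
  id1 : forall a : Obj, Hom a a;
  (* comp1 g f = "g f" : first f, then g (order of functor composition) *)
  comp1 : forall a b c : Obj, Hom b c -> Hom a b -> Hom a c;
  id2 : forall (a b : Obj) (f : Hom a b), Cell f f;
  (* vcomp beta alpha = "beta * alpha" : first alpha, then beta *)
  vcomp : forall (a b : Obj) (f g h : Hom a b), Cell g h -> Cell f g -> Cell f h;
  hcomp : forall (a b c : Obj) (g g' : Hom b c) (f f' : Hom a b),
      Cell g g' -> Cell f f' -> Cell (comp1 g f) (comp1 g' f')
}.

Arguments Hom {K} a b : rename.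
Arguments Cell {K a b} f g : rename.
Arguments id1 {K} a : rename.
Arguments comp1 {K a b c} g f : rename.
Arguments id2 {K a b} f : rename.
Arguments vcomp {K a b f g h} beta alpha : rename.
Arguments hcomp {K a b c g g' f f'} beta alpha : rename.

Definition eqcell (K : TwoCatData) (a b : Obj K) (f g : Hom a b) (e : f = g)
  : Cell f g :=
  match e in _ = g' return Cell f g' with eq_refl => id2 f end.
Arguments eqcell {K a b f g} e.

Declare Scope cell_scope.
Delimit Scope cell_scope with cell.
Notation "beta ** alpha" := (vcomp beta alpha)
  (at level 40, left associativity) : cell_scope.
Open Scope cell_scope.

Record is_TwoCat (K : TwoCatData) : Prop := {
  comp1_assoc : forall (a b c d : Obj K) (f : Hom a b) (g : Hom b c) (h : Hom c d),
      comp1 h (comp1 g f) = comp1 (comp1 h g) f;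
  comp1_id_l : forall (a b : Obj K) (f : Hom a b), comp1 (id1 b) f = f;
  comp1_id_r : forall (a b : Obj K) (f : Hom a b), comp1 f (id1 a) = f;
  vcomp_assoc : forall (a b : Obj K) (f g h i : Hom a b)
      (gamma : Cell h i) (beta : Cell g h) (alpha : Cell f g),
      gamma ** (beta ** alpha) = (gamma ** beta) ** alpha;
  vcomp_id_l : forall (a b : Obj K) (f g : Hom a b) (alpha : Cell f g),
      id2 g ** alpha = alpha;
  vcomp_id_r : forall (a b : Obj K) (f g : Hom a b) (alpha : Cell f g),
      alpha ** id2 f = alpha;
  hcomp_id : forall (a b c : Obj K) (g : Hom b c) (f : Hom a b),
      hcomp (id2 g) (id2 f) = id2 (comp1 g f);
  interchange : forall (a b c : Obj K) (g g' g'' : Hom b c) (f f' f'' : Hom a b)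
      (beta' : Cell g' g'') (beta : Cell g g') (alpha' : Cell f' f'') (alpha : Cell f f'),
      hcomp (beta' ** beta) (alpha' ** alpha) = hcomp beta' alpha' ** hcomp beta alpha;
  hcomp_assoc : forall (a b c d : Obj K) (f f' : Hom a b) (g g' : Hom b c) (h h' : Hom c d)
      (alpha : Cell f f') (beta : Cell g g') (gamma : Cell h h'),
      eqcell (comp1_assoc f' g' h') ** hcomp gamma (hcomp beta alpha)
      = hcomp (hcomp gamma beta) alpha ** eqcell (comp1_assoc f g h);
  hcomp_id_l : forall (a b : Obj K) (f f' : Hom a b) (alpha : Cell f f'),
      eqcell (comp1_id_l f') ** hcomp (id2 (id1 b)) alpha = alpha ** eqcell (comp1_id_l f);
  hcomp_id_r : forall (a b : Obj K) (f f' : Hom a b) (alpha : Cell f f'),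
      eqcell (comp1_id_r f') ** hcomp alpha (id2 (id1 a)) = alpha ** eqcell (comp1_id_r f)
}.

Record TwoCat := { tc_data :> TwoCatData; tc_axioms : is_TwoCat tc_data }.

Section Cells.
Variable K : TwoCat.

(* wl V alpha = "V alpha" *)
Definition wl (a b c : Obj K) (V : Hom b c) (f g : Hom a b) (alpha : Cell f g)
  : Cell (comp1 V f) (comp1 V g) := hcomp (id2 V) alpha.
(* wr alpha t = "alpha t" *)
Definition wr (a b c : Obj K) (f g : Hom b c) (alpha : Cell f g) (t : Hom a b)
  : Cell (comp1 f t) (comp1 g t) := hcomp alpha (id2 t).

(** Identity 2-cells between the (equal) bracketings of composites; in a strict
    2-category these are identities, we insert them only to make the composites
    typecheck. *)
Definition asc (a b c d : Obj K) (f : Hom a b) (g : Hom b c) (h : Hom c d)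
  : Cell (comp1 h (comp1 g f)) (comp1 (comp1 h g) f) :=
  eqcell (comp1_assoc (tc_axioms K) f g h).
Definition asc' (a b c d : Obj K) (f : Hom a b) (g : Hom b c) (h : Hom c d)
  : Cell (comp1 (comp1 h g) f) (comp1 h (comp1 g f)) :=
  eqcell (eq_sym (comp1_assoc (tc_axioms K) f g h)).
Definition lu (a b : Obj K) (f : Hom a b) : Cell (comp1 (id1 b) f) f :=
  eqcell (comp1_id_l (tc_axioms K) f).
Definition lu' (a b : Obj K) (f : Hom a b) : Cell f (comp1 (id1 b) f) :=
  eqcell (eq_sym (comp1_id_l (tc_axioms K) f)).
Definition ru (a b : Obj K) (f : Hom a b) : Cell (comp1 f (id1 a)) f :=
  eqcell (comp1_id_r (tc_axioms K) f).
End Cells.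

Arguments wl {K a b c} V {f g} alpha.
Arguments wr {K a b c f g} alpha t.
Arguments asc {K a b c d} f g h.
Arguments asc' {K a b c d} f g h.
Arguments lu {K a b} f.
Arguments lu' {K a b} f.
Arguments ru {K a b} f.

Definition is_monad (K : TwoCat) (k : Obj K) (t : Hom k k)
    (mu : Cell (comp1 t t) t) (eta : Cell (id1 k) t) : Prop :=
  mu ** wr mu t ** asc t t t = mu ** wl t mu
  /\ mu ** wr eta t = lu t
  /\ mu ** wl t eta = ru t.

Definition is_EM1cell (K : TwoCat) (k k' : Obj K)
    (t : Hom k k) (mu : Cell (comp1 t t) t)
    (t' : Hom k' k') (mu' : Cell (comp1 t' t') t')
    (V : Hom k k') (psi : Cell (comp1 t' V) (comp1 V t)) : Prop :=
  wl V mu ** asc' t t V ** wr psi t ** asc t V t' ** wl t' psi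
  = psi ** wr mu' V ** asc V t' t'.

Definition is_EM2cell (K : TwoCat) (k k' : Obj K)
    (t : Hom k k) (mu : Cell (comp1 t t) t)
    (t' : Hom k' k') (eta' : Cell (id1 k') t')
    (V : Hom k k') (psi : Cell (comp1 t' V) (comp1 V t))
    (W : Hom k k') (phi : Cell (comp1 t' W) (comp1 W t))
    (rho : Cell V (comp1 W t)) : Prop :=
  wl W mu ** asc' t t W ** wr rho t ** psi
    = wl W mu ** asc' t t W ** wr phi t ** asc t W t' ** wl t' rho
  /\ rho = wl W mu ** asc' t t W ** wr phi t ** asc t W t'
             ** wr eta' (comp1 W t) ** lu' (comp1 W t) ** rho.

(* Main.v *)
Require Import Defs.
From Stdlib Require Import ProofIrrelevance Setoid.
Set Implicit Arguments.
Unset Strict Implicit.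

Lemma vA (K : TwoCat) (a b : Obj K) (f g h i : Hom a b)
  (x : Cell h i) (y : Cell g h) (z : Cell f g) : x ** (y ** z) = (x ** y) ** z.
Proof. apply (vcomp_assoc (tc_axioms K)). Qed.
Lemma vidl (K : TwoCat) (a b : Obj K) (f g : Hom a b) (x : Cell f g) : id2 g ** x = x.
Proof. apply (vcomp_id_l (tc_axioms K)). Qed.
Lemma vidr (K : TwoCat) (a b : Obj K) (f g : Hom a b) (x : Cell f g) : x ** id2 f = x.
Proof. apply (vcomp_id_r (tc_axioms K)). Qed.

Lemma eqcell_pi (K : TwoCat) (a b : Obj K) (f g : Hom a b) (e1 e2 : f = g) :
  eqcell e1 = eqcell e2.
Proof. rewrite (proof_irrelevance _ e1 e2). reflexivity. Qed.
Lemma eqcell_id (K : TwoCat) (a b : Obj K) (f : Hom a b) (e : f = f) :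
  eqcell e = id2 f.
Proof. rewrite (proof_irrelevance _ e eq_refl). reflexivity. Qed.
Lemma eqcell_tr (K : TwoCat) (a b : Obj K) (f g h : Hom a b) (e1 : g = h) (e2 : f = g) :
  eqcell e1 ** eqcell e2 = eqcell (eq_trans e2 e1).
Proof. destruct e1, e2. simpl. apply vidl. Qed.
Lemma eqcell_trp (K : TwoCat) (a b : Obj K) (f g h i : Hom a b) (e1 : g = h) (e2 : f = g) (r : Cell i f) :
  eqcell e1 ** (eqcell e2 ** r) = eqcell (eq_trans e2 e1) ** r.
Proof. rewrite vA, eqcell_tr. reflexivity. Qed.
Lemma wl_eqcell (K : TwoCat) (a b c : Obj K) (V : Hom b c) (f g : Hom a b) (e : f = g) :
  wl V (eqcell e) = eqcell (f_equal (comp1 V) e).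
Proof. destruct e. apply (hcomp_id (tc_axioms K)). Qed.
Lemma wr_eqcell (K : TwoCat) (a b c : Obj K) (t : Hom a b) (f g : Hom b c) (e : f = g) :
  wr (eqcell e) t = eqcell (f_equal (fun x => comp1 x t) e).
Proof. destruct e. apply (hcomp_id (tc_axioms K)). Qed.

Lemma wl_comp (K : TwoCat) (a b c : Obj K) (V : Hom b c) (f g h : Hom a b)
  (x : Cell g h) (y : Cell f g) : wl V (x ** y) = wl V x ** wl V y.
Proof. unfold wl. rewrite <- (interchange (tc_axioms K)), vidl. reflexivity. Qed.
Lemma wr_comp (K : TwoCat) (a b c : Obj K) (t : Hom a b) (f g h : Hom b c)
  (x : Cell g h) (y : Cell f g) : wr (x ** y) t = wr x t ** wr y t.
Proof. unfold wr. rewrite <- (interchange (tc_axioms K)), vidl. reflexivity. Qed.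
Lemma wl_id (K : TwoCat) (a b c : Obj K) (V : Hom b c) (f : Hom a b) :
  wl V (id2 f) = id2 (comp1 V f).
Proof. apply (hcomp_id (tc_axioms K)). Qed.
Lemma wr_id (K : TwoCat) (a b c : Obj K) (t : Hom a b) (f : Hom b c) :
  wr (id2 f) t = id2 (comp1 f t).
Proof. apply (hcomp_id (tc_axioms K)). Qed.
Lemma hc_split1 (K : TwoCat) (a b c : Obj K) (g g' : Hom b c) (f f' : Hom a b)
  (be : Cell g g') (al : Cell f f') : hcomp be al = wr be f' ** wl g al.
Proof. unfold wl, wr. rewrite <- (interchange (tc_axioms K)), vidl, vidr. reflexivity. Qed.
Lemma hc_split2 (K : TwoCat) (a b c : Obj K) (g g' : Hom b c) (f f' : Hom a b)
  (be : Cell g g') (al : Cell f f') : hcomp be al = wl g' al ** wr be f.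
Proof. unfold wl, wr. rewrite <- (interchange (tc_axioms K)), vidl, vidr. reflexivity. Qed.

Ltac ra := repeat rewrite <- vA.
Ltac rw H :=
  let T := type of H in
  lazymatch T with @eq (@Cell ?K ?a ?b ?f ?g) ?l ?r =>
    let Hp := fresh "Hp" in
    assert (Hp : forall (f0 : Hom a b) (r0 : Cell f0 f), l ** r0 = r ** r0)
      by (intros f0 r0; rewrite H; reflexivity);
    let Hr := fresh "Hr" in pose proof H as Hr;
    repeat setoid_rewrite <- vA in Hp; repeat rewrite <- vA in Hr;
    first [rewrite Hp | rewrite Hr]; clear Hp Hr; ra
  end.

Ltac coh :=
  unfold asc, asc', lu, lu', ru in *;
  repeat rewrite ?wl_eqcell, ?wr_eqcell;
  ra;
  repeat (rewrite eqcell_trp || rewrite eqcell_tr);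
  repeat rewrite eqcell_id; repeat rewrite ?vidl, ?vidr.

Lemma cong (K : TwoCat) (a b : Obj K) (f g h : Hom a b) (x x' : Cell g h) (y y' : Cell f g) :
  x = x' -> y = y' -> x ** y = x' ** y'.
Proof. intros -> ->. reflexivity. Qed.
Ltac fin := repeat first [reflexivity | apply eqcell_pi | apply cong].

Lemma G2 (K : TwoCat) (a b c d : Obj K) (f f' : Hom a b) (g : Hom b c) (h : Hom c d)
  (al : Cell f f') : asc f' g h ** wl h (wl g al) = wl (comp1 h g) al ** asc f g h.
Proof.
  unfold asc, wl. pose proof (hcomp_assoc (tc_axioms K) al (id2 g) (id2 h)) as H.
  rewrite (hcomp_id (tc_axioms K)) in H. exact H.
Qed.
Lemma G3 (K : TwoCat) (a b c d : Obj K) (f : Hom a b) (g : Hom b c) (h h' : Hom c d)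
  (ga : Cell h h') : asc f g h' ** wr ga (comp1 g f) = wr (wr ga g) f ** asc f g h.
Proof.
  unfold asc, wr. pose proof (hcomp_assoc (tc_axioms K) (id2 f) (id2 g) ga) as H.
  rewrite (hcomp_id (tc_axioms K)) in H. exact H.
Qed.
Lemma G4 (K : TwoCat) (a b c d : Obj K) (f : Hom a b) (g g' : Hom b c) (h : Hom c d)
  (be : Cell g g') : asc f g' h ** wl h (wr be f) = wr (wl h be) f ** asc f g h.
Proof.
  unfold asc, wr, wl. apply (hcomp_assoc (tc_axioms K) (id2 f) be (id2 h)).
Qed.
Lemma G5 (K : TwoCat) (a b : Obj K) (f f' : Hom a b) (al : Cell f f') :
  wl (id1 b) al ** lu' f = lu' f' ** al.
Proof.
  pose proof (hcomp_id_l (tc_axioms K) al) as H. unfold wl, lu'.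
  assert (E : forall (x y : Cell f (comp1 (id1 b) f')),
    eqcell (comp1_id_l (tc_axioms K) f') ** x = eqcell (comp1_id_l (tc_axioms K) f') ** y -> x = y).
  { intros x y Hxy.
    rewrite <- (vidl x), <- (vidl y).
    rewrite <- (eqcell_id (eq_trans (comp1_id_l (tc_axioms K) f') (eq_sym (comp1_id_l (tc_axioms K) f')))).
    rewrite <- !eqcell_tr, <- !vA, Hxy. reflexivity. }
  apply E. rewrite !vA, H. ra. repeat (rewrite eqcell_trp || rewrite eqcell_tr).
  rewrite !eqcell_id, vidl, vidr. reflexivity.
Qed.

Definition muR (K : TwoCat) (k k' : Obj K) (t : Hom k k) (mu : Cell (comp1 t t) t) (X : Hom k k')
  : Cell (comp1 (comp1 X t) t) (comp1 X t) := wl X mu ** asc' t t X.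
Definition muL (K : TwoCat) (k k' : Obj K) (t' : Hom k' k') (mu' : Cell (comp1 t' t') t') (X : Hom k k')
  : Cell (comp1 t' (comp1 t' X)) (comp1 t' X) := wr mu' X ** asc X t' t'.
Definition etL (K : TwoCat) (k k' : Obj K) (t' : Hom k' k') (eta' : Cell (id1 k') t') (X : Hom k k')
  : Cell X (comp1 t' X) := wr eta' X ** lu' X.

Lemma a1 (K : TwoCat) (k k' : Obj K) (t' : Hom k' k') (eta' : Cell (id1 k') t') (X Y : Hom k k')
  (s : Cell X Y) : etL eta' Y ** s = wl t' s ** etL eta' X.
Proof.
  unfold etL. ra. rw (eq_sym (G5 s)). rw (eq_sym (hc_split1 eta' s)). rw (hc_split2 eta' s).
  reflexivity.
Qed.

Lemma a2 (K : TwoCat) (k k' : Obj K) (t' : Hom k' k') (mu' : Cell (comp1 t' t') t') (X Y : Hom k k')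
  (s : Cell X Y) : muL mu' Y ** wl t' (wl t' s) = wl t' s ** muL mu' X.
Proof.
  unfold muL. ra. rw (G2 t' t' s). rw (eq_sym (hc_split1 mu' s)). rw (hc_split2 mu' s).
  reflexivity.
Qed.

Lemma a3 (K : TwoCat) (k k' : Obj K) (t : Hom k k) (mu : Cell (comp1 t t) t) (X Y : Hom k k')
  (s : Cell X Y) : muR mu Y ** wr (wr s t) t = wr s t ** muR mu X.
Proof.
  unfold muR. ra.
  assert (H : asc' t t Y ** wr (wr s t) t = wr s (comp1 t t) ** asc' t t X).
  { pose proof (G3 t t s) as G. 
    transitivity (asc' t t Y ** (wr (wr s t) t ** (asc t t X ** asc' t t X))).
    - coh. reflexivity.
    - ra. rw (eq_sym G). coh. reflexivity. }
  rw H. rw (eq_sym (hc_split2 s mu)). rw (hc_split1 s mu). reflexivity.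
Qed.

Lemma a4 (K : TwoCat) (k k' : Obj K) (t' : Hom k' k') (mu' : Cell (comp1 t' t') t')
  (eta' : Cell (id1 k') t') (Hu : mu' ** wr eta' t' = lu t') (X : Hom k k') :
  muL mu' X ** etL eta' (comp1 t' X) = id2 _.
Proof.
  unfold muL, etL. ra. rw (G3 X t' eta'). rw (eq_sym (wr_comp X mu' (wr eta' t'))).
  rewrite Hu. coh. reflexivity.
Qed.

Lemma a5 (K : TwoCat) (k k' : Obj K) (t' : Hom k' k') (mu' : Cell (comp1 t' t') t')
  (eta' : Cell (id1 k') t') (Hu : mu' ** wl t' eta' = ru t') (X : Hom k k') :
  muL mu' X ** wl t' (etL eta' X) = id2 _.
Proof.
  unfold muL, etL. rewrite wl_comp. ra. rw (G4 X t' eta'). rw (eq_sym (wr_comp X mu' (wl t' eta'))).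
  rewrite Hu. coh. reflexivity.
Qed.

Lemma a6 (K : TwoCat) (k k' : Obj K) (t : Hom k k) (mu : Cell (comp1 t t) t)
  (Ha : mu ** wr mu t ** asc t t t = mu ** wl t mu) (X : Hom k k') :
  muR mu X ** wr (muR mu X) t = muR mu X ** muR mu (comp1 X t).
Proof.
  assert (Ha' : mu ** wr mu t = mu ** wl t mu ** asc' t t t).
  { rewrite <- Ha. ra. coh. reflexivity. }
  assert (E1 : wr (wl X mu) t = asc t t X ** wl X (wr mu t) ** asc' t (comp1 t t) X).
  { ra. rw (G4 t X mu). coh. reflexivity. }
  assert (E2 : wl (comp1 X t) mu = asc t t X ** wl X (wl t mu) ** asc' (comp1 t t) t X).
  { ra. rw (G2 t X mu). coh. reflexivity. }
  unfold muR. rewrite wr_comp, E1, E2. ra. coh.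
  rw (eq_sym (wl_comp X mu (wr mu t))). rewrite Ha'. rewrite !wl_comp. coh. fin.
Qed.

Lemma a12 (K : TwoCat) (k k' : Obj K) (t : Hom k k) (t' : Hom k' k') (mu' : Cell (comp1 t' t') t')
  (X : Hom k k') :
  wr (muL mu' X) t ** asc t (comp1 t' X) t' ** wl t' (asc t X t') = asc t X t' ** muL mu' (comp1 X t).
Proof.
  unfold muL. ra. rw (G3 t X mu'). rewrite wr_comp. coh. fin.
Qed.

Lemma a13 (K : TwoCat) (k k' : Obj K) (t : Hom k k) (mu : Cell (comp1 t t) t) (t' : Hom k' k')
  (X : Hom k k') :
  asc t X t' ** wl t' (muR mu X) = muR mu (comp1 t' X) ** wr (asc t X t') t ** asc t (comp1 X t) t'.
Proof.
  unfold muR. rewrite wl_comp. ra. rw (G2 X t' mu). coh. fin.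
Qed.

Lemma N3a (K : TwoCat) (k k' : Obj K) (t : Hom k k) (t' : Hom k' k') (eta' : Cell (id1 k') t')
  (X : Hom k k') : wr (etL eta' X) t = asc t X t' ** etL eta' (comp1 X t).
Proof.
  unfold etL. ra. rw (G3 t X eta'). rewrite wr_comp. coh. fin.
Qed.
Lemma muR_def (K : TwoCat) (k k' : Obj K) (t : Hom k k) (mu : Cell (comp1 t t) t) (X : Hom k k') :
  muR mu X = wl X mu ** asc' t t X.
Proof. reflexivity. Qed.
Lemma muL_def (K : TwoCat) (k k' : Obj K) (t' : Hom k' k') (mu' : Cell (comp1 t' t') t') (X : Hom k k') :
  muL mu' X = wr mu' X ** asc X t' t'.
Proof. reflexivity. Qed.
Lemma etL_def (K : TwoCat) (k k' : Obj K) (t' : Hom k' k') (eta' : Cell (id1 k') t') (X : Hom k k') :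
  etL eta' X = wr eta' X ** lu' X.
Proof. reflexivity. Qed.
#[global] Opaque muR muL etL.

Definition Mphi (K : TwoCat) (k k' : Obj K) (t : Hom k k) (mu : Cell (comp1 t t) t)
  (t' : Hom k' k') (W : Hom k k') (phi : Cell (comp1 t' W) (comp1 W t))
  : Cell (comp1 t' (comp1 W t)) (comp1 W t) := muR mu W ** wr phi t ** asc t W t'.

Lemma L9 (K : TwoCat) (k k' : Obj K) (t : Hom k k) (mu : Cell (comp1 t t) t)
  (Ha : mu ** wr mu t ** asc t t t = mu ** wl t mu)
  (t' : Hom k' k') (W : Hom k k') (phi : Cell (comp1 t' W) (comp1 W t)) :
  muR mu W ** wr (Mphi mu phi) t ** asc t (comp1 W t) t' = Mphi mu phi ** wl t' (muR mu W).
Proof.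
  unfold Mphi. ra. rw (a13 mu t' W). rw (eq_sym (a3 mu phi)). rw (eq_sym (a6 Ha W)).
  rewrite !wr_comp. ra. reflexivity.
Qed.

Ltac ra_in H := repeat rewrite <- vA in H.

Lemma HWf (K : TwoCat) (k k' : Obj K) (t : Hom k k) (mu : Cell (comp1 t t) t)
  (t' : Hom k' k') (mu' : Cell (comp1 t' t') t') (W : Hom k k') (phi : Cell (comp1 t' W) (comp1 W t)) :
  is_EM1cell mu mu' phi -> Mphi mu phi ** wl t' phi = phi ** muL mu' W.
Proof.
  unfold is_EM1cell. intro H. unfold Mphi. rewrite muR_def, muL_def. ra_in H. ra. exact H.
Qed.
Lemma Mphi_def (K : TwoCat) (k k' : Obj K) (t : Hom k k) (mu : Cell (comp1 t t) t)
  (t' : Hom k' k') (W : Hom k k') (phi : Cell (comp1 t' W) (comp1 W t)) :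
  Mphi mu phi = muR mu W ** wr phi t ** asc t W t'.
Proof. reflexivity. Qed.
#[global] Opaque Mphi.

Lemma M1 (K : TwoCat) (k k' : Obj K) (t : Hom k k) (mu : Cell (comp1 t t) t)
  (Ha : mu ** wr mu t ** asc t t t = mu ** wl t mu)
  (t' : Hom k' k') (mu' : Cell (comp1 t' t') t') (W : Hom k k') (phi : Cell (comp1 t' W) (comp1 W t))
  (HW : is_EM1cell mu mu' phi) :
  Mphi mu phi ** wl t' (Mphi mu phi) = Mphi mu phi ** muL mu' (comp1 W t).
Proof.
  assert (E : wl t' (Mphi mu phi) = wl t' (muR mu W) ** wl t' (wr phi t) ** wl t' (asc t W t')).
  { rewrite Mphi_def, !wl_comp. reflexivity. }
  rewrite E. ra. rw (eq_sym (L9 Ha phi)).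
  rw (G4 t t' phi). rw (eq_sym (wr_comp t (Mphi mu phi) (wl t' phi))). rewrite (HWf HW).
  rewrite wr_comp. ra. rw (a12 t mu' W). rewrite Mphi_def. ra. reflexivity.
Qed.

Lemma L2 (K : TwoCat) (k k' : Obj K) (t : Hom k k) (mu : Cell (comp1 t t) t)
  (Ha : mu ** wr mu t ** asc t t t = mu ** wl t mu)
  (t' : Hom k' k') (mu' : Cell (comp1 t' t') t') (W : Hom k k') (phi : Cell (comp1 t' W) (comp1 W t))
  (HW : is_EM1cell mu mu' phi) (X : Hom k k') (tau : Cell X (comp1 W t)) :
  Mphi mu phi ** wl t' (Mphi mu phi ** wl t' tau) = Mphi mu phi ** wl t' tau ** muL mu' X.
Proof. rewrite wl_comp. ra. rw (M1 Ha HW). rw (a2 mu' tau). reflexivity. Qed.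

Lemma L1 (K : TwoCat) (k k' : Obj K) (t : Hom k k) (mu : Cell (comp1 t t) t)
  (t' : Hom k' k') (eta' : Cell (id1 k') t') (W : Hom k k') (phi : Cell (comp1 t' W) (comp1 W t))
  (X : Hom k k') (s : Cell X (comp1 W t)) :
  Mphi mu phi ** wr eta' (comp1 W t) ** lu' (comp1 W t) ** s = Mphi mu phi ** wl t' s ** etL eta' X.
Proof.
  pose proof (a1 eta' s) as H. rewrite !etL_def in H. rewrite etL_def. ra. rw H. reflexivity.
Qed.

Lemma L3 (K : TwoCat) (k k' : Obj K) (t : Hom k k) (mu : Cell (comp1 t t) t)
  (Ha : mu ** wr mu t ** asc t t t = mu ** wl t mu)
  (t' : Hom k' k') (mu' : Cell (comp1 t' t') t') (eta' : Cell (id1 k') t')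
  (Hu1 : mu' ** wr eta' t' = lu t')
  (W : Hom k k') (phi : Cell (comp1 t' W) (comp1 W t))
  (HW : is_EM1cell mu mu' phi) (X : Hom k k') (tau : Cell X (comp1 W t)) :
  Mphi mu phi ** wr eta' (comp1 W t) ** lu' (comp1 W t) ** (Mphi mu phi ** wl t' tau)
  = Mphi mu phi ** wl t' tau.
Proof.
  rewrite L1, (L2 Ha HW). ra. rw (a4 Hu1 X). rewrite vidr. reflexivity.
Qed.

Lemma L4 (K : TwoCat) (k k' : Obj K) (t : Hom k k) (mu : Cell (comp1 t t) t)
  (t' : Hom k' k') (mu' : Cell (comp1 t' t') t') (eta' : Cell (id1 k') t')
  (Hu1 : mu' ** wr eta' t' = lu t')
  (V : Hom k k') (psi : Cell (comp1 t' V) (comp1 V t)) (HV : is_EM1cell mu mu' psi)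
  (W : Hom k k') (om : Cell V W) :
  muR mu W ** wr (wr om t ** psi ** wr eta' V ** lu' V) t ** psi = wr om t ** psi.
Proof.
  rewrite !wr_comp. ra. rw (a3 mu om).
  pose proof (N3a t eta' V) as H1. rewrite !etL_def, wr_comp in H1. rw H1.
  pose proof (a1 eta' psi) as H2. rewrite !etL_def in H2. rw H2.
  pose proof (HWf HV) as H3. rewrite Mphi_def in H3. rw H3.
  pose proof (a4 Hu1 V) as H4. rewrite !etL_def in H4. rw H4. rewrite vidr. reflexivity.
Qed.

Lemma L5 (K : TwoCat) (k k' : Obj K) (t : Hom k k) (mu : Cell (comp1 t t) t)
  (t' : Hom k' k') (mu' : Cell (comp1 t' t') t') (eta' : Cell (id1 k') t')
  (Hu2 : mu' ** wl t' eta' = ru t')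
  (V : Hom k k') (W : Hom k k') (phi : Cell (comp1 t' W) (comp1 W t)) (HW : is_EM1cell mu mu' phi)
  (om : Cell V W) :
  Mphi mu phi ** wl t' (phi ** wr eta' W ** lu' W ** om) = phi ** wl t' om.
Proof.
  rewrite !wl_comp. ra. rw (HWf HW).
  pose proof (a5 Hu2 W) as H5. rewrite !etL_def, wl_comp in H5. rw H5. rewrite vidl. reflexivity.
Qed.

Lemma L6 (K : TwoCat) (k k' : Obj K) (t : Hom k k) (mu : Cell (comp1 t t) t)
  (t' : Hom k' k') (eta' : Cell (id1 k') t')
  (V : Hom k k') (psi : Cell (comp1 t' V) (comp1 V t))
  (W : Hom k k') (phi : Cell (comp1 t' W) (comp1 W t)) (om : Cell V W) :
  muR mu W ** wr (phi ** wr eta' W ** lu' W ** om) t ** psi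
  = Mphi mu phi ** wr eta' (comp1 W t) ** lu' (comp1 W t) ** (wr om t ** psi).
Proof.
  rewrite !wr_comp. ra.
  pose proof (N3a t eta' W) as H1. rewrite !etL_def, wr_comp in H1. rw H1.
  rewrite Mphi_def. ra. reflexivity.
Qed.

Lemma L7 (K : TwoCat) (k k' : Obj K) (t : Hom k k) (mu : Cell (comp1 t t) t)
  (t' : Hom k' k') (mu' : Cell (comp1 t' t') t') (eta' : Cell (id1 k') t')
  (Hu2 : mu' ** wl t' eta' = ru t')
  (V : Hom k k') (W : Hom k k') (phi : Cell (comp1 t' W) (comp1 W t)) (HW : is_EM1cell mu mu' phi)
  (om : Cell V W) :
  Mphi mu phi ** wl t' (phi ** wr eta' W ** lu' W ** om) ** wr eta' V ** lu' V
  = phi ** wr eta' W ** lu' W ** om.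
Proof.
  rewrite (L5 Hu2 HW). ra.
  pose proof (a1 eta' om) as H. rewrite !etL_def in H. rw (eq_sym H). reflexivity.
Qed.

Lemma L8 (K : TwoCat) (k k' : Obj K) (t : Hom k k) (mu : Cell (comp1 t t) t)
  (Ha : mu ** wr mu t ** asc t t t = mu ** wl t mu)
  (t' : Hom k' k') (eta' : Cell (id1 k') t')
  (V : Hom k k') (psi : Cell (comp1 t' V) (comp1 V t))
  (W : Hom k k') (phi : Cell (comp1 t' W) (comp1 W t)) (tau : Cell V (comp1 W t)) :
  muR mu W ** wr (Mphi mu phi ** wl t' tau ** wr eta' V ** lu' V) t ** psi
  = Mphi mu phi ** wr eta' (comp1 W t) ** lu' (comp1 W t) ** (muR mu W ** wr tau t ** psi).
Proof.
  rewrite L1. rewrite !wr_comp. ra.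
  pose proof (N3a t eta' V) as H1. rewrite !etL_def, wr_comp in H1. rw H1.
  pose proof (a1 eta' psi) as H2. rewrite !etL_def in H2. rw H2.
  rw (eq_sym (G4 t t' tau)). rw (L9 Ha phi).
  rewrite etL_def, !wl_comp. ra. reflexivity.
Qed.

Lemma P1 (K : TwoCat) (k k' : Obj K) (t : Hom k k) (mu : Cell (comp1 t t) t)
  (t' : Hom k' k') (mu' : Cell (comp1 t' t') t')
  (V : Hom k k') (W : Hom k k') (phi : Cell (comp1 t' W) (comp1 W t)) (HW : is_EM1cell mu mu' phi)
  (om : Cell V W) :
  Mphi mu phi ** wl t' (phi ** wl t' om) = phi ** wl t' om ** muL mu' V.
Proof. rewrite wl_comp. ra. rw (HWf HW). rw (a2 mu' om). reflexivity. Qed.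

Lemma P2 (K : TwoCat) (k k' : Obj K) (t : Hom k k) (mu : Cell (comp1 t t) t)
  (Ha : mu ** wr mu t ** asc t t t = mu ** wl t mu)
  (t' : Hom k' k') (mu' : Cell (comp1 t' t') t') (eta' : Cell (id1 k') t')
  (Hu2 : mu' ** wl t' eta' = ru t')
  (W : Hom k k') (phi : Cell (comp1 t' W) (comp1 W t))
  (HW : is_EM1cell mu mu' phi) (X : Hom k k') (tau : Cell X (comp1 W t)) :
  Mphi mu phi ** wl t' (Mphi mu phi ** wl t' tau ** wr eta' X ** lu' X) = Mphi mu phi ** wl t' tau.
Proof.
  rewrite <- (vA (Mphi mu phi ** wl t' tau)), <- etL_def.
  rewrite (wl_comp t' (Mphi mu phi ** wl t' tau)). rewrite vA, (L2 Ha HW). ra.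
  rw (a5 Hu2 X). rewrite vidr. reflexivity.
Qed.

Lemma P3 (K : TwoCat) (k k' : Obj K) (t : Hom k k)
  (t' : Hom k' k') (eta' : Cell (id1 k') t')
  (V : Hom k k') (W : Hom k k') (phi : Cell (comp1 t' W) (comp1 W t)) (om : Cell V W) :
  phi ** wr eta' W ** lu' W ** om = phi ** wl t' om ** wr eta' V ** lu' V.
Proof.
  pose proof (a1 eta' om) as H. rewrite !etL_def in H. ra. rw H. reflexivity.
Qed.
Unset Implicit Arguments.
Set Strict Implicit.
Theorem lemma1p2 (K : TwoCat) (k k' : Obj K)
    (t : Hom k k) (mu : Cell (comp1 t t) t) (eta : Cell (id1 k) t)
    (Hmon : is_monad mu eta)
    (t' : Hom k' k') (mu' : Cell (comp1 t' t') t') (eta' : Cell (id1 k') t')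
    (Hmon' : is_monad mu' eta')
    (V : Hom k k') (psi : Cell (comp1 t' V) (comp1 V t))
    (HV : is_EM1cell mu mu' psi)
    (W : Hom k k') (phi : Cell (comp1 t' W) (comp1 W t))
    (HW : is_EM1cell mu mu' phi)
    (omega : Cell V W) :
  (* (1) *)
  ((is_EM2cell mu eta' psi phi (wr omega t ** psi ** wr eta' V ** lu' V)
    <-> wr omega t ** psi
        = wl W mu ** asc' t t W ** wr phi t ** asc t W t'
          ** wl t' (wr omega t) ** wl t' psi ** wl t' (wr eta' V) ** wl t' (lu' V))
   /\
   (is_EM2cell mu eta' psi phi (wr omega t ** psi ** wr eta' V ** lu' V)
    <-> (wl W mu ** asc' t t W ** wr phi t ** asc t W t'
           ** wr eta' (comp1 W t) ** lu' (comp1 W t)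
           ** (wr omega t ** psi ** wr eta' V ** lu' V)
         = wr omega t ** psi ** wr eta' V ** lu' V
         /\ wl W mu ** asc' t t W ** wr phi t ** asc t W t'
              ** wr eta' (comp1 W t) ** lu' (comp1 W t) ** wr omega t ** psi
            = wl W mu ** asc' t t W ** wr phi t ** asc t W t'
              ** wl t' (wr omega t) ** wl t' psi ** wl t' (wr eta' V) ** wl t' (lu' V))))
  /\
  (* (2) *)
  ((is_EM2cell mu eta' psi phi (phi ** wr eta' W ** lu' W ** omega)
    <-> phi ** wl t' omega
        = wl W mu ** asc' t t W ** wr phi t ** asc t W t'
          ** wr eta' (comp1 W t) ** lu' (comp1 W t) ** wr omega t ** psi)
   /\
   (is_EM2cell mu eta' psi phi (phi ** wr eta' W ** lu' W ** omega)
    <-> (wl W mu ** asc' t t W ** wr phi t ** asc t W t'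
           ** wr eta' (comp1 W t) ** lu' (comp1 W t) ** wr omega t ** psi
           ** wr eta' V ** lu' V
         = phi ** wr eta' W ** lu' W ** omega
         /\ wl W mu ** asc' t t W ** wr phi t ** asc t W t'
              ** wr eta' (comp1 W t) ** lu' (comp1 W t) ** wr omega t ** psi
            = wl W mu ** asc' t t W ** wr phi t ** asc t W t'
              ** wl t' (wr omega t) ** wl t' psi ** wl t' (wr eta' V) ** wl t' (lu' V))))
  /\
  (* (3) *)
  ((phi ** wl t' omega = wr omega t ** psi
    <-> is_EM2cell mu eta' psi phi (phi ** wr eta' W ** lu' W ** omega)
        /\ is_EM2cell mu eta' psi phi (wr omega t ** psi ** wr eta' V ** lu' V))
   /\
   (phi ** wl t' omega = wr omega t ** psi ->
    phi ** wr eta' W ** lu' W ** omega = wr omega t ** psi ** wr eta' V ** lu' V)).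
Proof.
  destruct Hmon as [Ha [_ _]]. destruct Hmon' as [_ [Hu1 Hu2]].
  unfold is_EM2cell.
  rewrite <- !muR_def. rewrite <- !Mphi_def.
  assert (EQa : Mphi mu phi ** wr eta' (comp1 W t) ** lu' (comp1 W t) ** wr omega t ** psi
     = Mphi mu phi ** wr eta' (comp1 W t) ** lu' (comp1 W t) ** (wr omega t ** psi)) by (ra; reflexivity).
  assert (Ewl : Mphi mu phi ** wl t' (wr omega t) ** wl t' psi ** wl t' (wr eta' V) ** wl t' (lu' V)
     = Mphi mu phi ** wl t' (wr omega t ** psi ** wr eta' V ** lu' V)) by (rewrite !wl_comp; ra; reflexivity).
  rewrite !EQa, !Ewl. clear EQa Ewl.
  pose proof (L4 Hu1 HV omega) as F4.
  assert (F1a : Mphi mu phi ** wr eta' (comp1 W t) ** lu' (comp1 W t) ** (wr omega t ** psi ** wr eta' V ** lu' V)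
     = Mphi mu phi ** wl t' (wr omega t ** psi ** wr eta' V ** lu' V) ** wr eta' V ** lu' V)
    by (rewrite L1, etL_def; ra; reflexivity).
  assert (F1b : Mphi mu phi ** wr eta' (comp1 W t) ** lu' (comp1 W t) ** (phi ** wr eta' W ** lu' W ** omega)
     = Mphi mu phi ** wl t' (phi ** wr eta' W ** lu' W ** omega) ** wr eta' V ** lu' V)
    by (rewrite L1, etL_def; ra; reflexivity).
  pose proof (L3 Ha Hu1 HW (wr omega t ** psi ** wr eta' V ** lu' V)) as F3.
  pose proof (L8 Ha eta' psi phi (wr omega t ** psi ** wr eta' V ** lu' V)) as F8.
  pose proof (L5 Hu2 HW omega) as F5.
  pose proof (L6 mu eta' psi phi omega) as F6.
  pose proof (L7 Hu2 HW omega) as F7.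
  pose proof (P1 HW omega) as FP1.
  pose proof (P2 Ha Hu2 HW (wr omega t ** psi ** wr eta' V ** lu' V)) as FP2a.
  pose proof (P2 Ha Hu2 HW (wr omega t ** psi)) as FP2b.
  pose proof (P3 eta' phi omega) as FP3.
  pose proof (a5 Hu2 V) as Fa5. rewrite etL_def in Fa5.
  assert (FL1w : Mphi mu phi ** wr eta' (comp1 W t) ** lu' (comp1 W t) ** (wr omega t ** psi)
     = Mphi mu phi ** wl t' (wr omega t ** psi) ** wr eta' (comp1 t' V) ** lu' (comp1 t' V))
    by (rewrite L1, etL_def; ra; reflexivity).
  assert (I1 : (muR mu W ** wr (wr omega t ** psi ** wr eta' V ** lu' V) t ** psi
                = Mphi mu phi ** wl t' (wr omega t ** psi ** wr eta' V ** lu' V)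
               /\ wr omega t ** psi ** wr eta' V ** lu' V
                = Mphi mu phi ** wr eta' (comp1 W t) ** lu' (comp1 W t) ** (wr omega t ** psi ** wr eta' V ** lu' V))
      <-> wr omega t ** psi = Mphi mu phi ** wl t' (wr omega t ** psi ** wr eta' V ** lu' V)).
  { split.
    - intros [H _]. rewrite F4 in H. exact H.
    - intro H. split.
      + rewrite F4. exact H.
      + rewrite F1a. rewrite <- H. reflexivity. }
  assert (I2 : (muR mu W ** wr (phi ** wr eta' W ** lu' W ** omega) t ** psi
                = Mphi mu phi ** wl t' (phi ** wr eta' W ** lu' W ** omega)
               /\ phi ** wr eta' W ** lu' W ** omega
                = Mphi mu phi ** wr eta' (comp1 W t) ** lu' (comp1 W t) ** (phi ** wr eta' W ** lu' W ** omega))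
      <-> phi ** wl t' omega = Mphi mu phi ** wr eta' (comp1 W t) ** lu' (comp1 W t) ** (wr omega t ** psi)).
  { split.
    - intros [H _]. rewrite <- F5, <- F6. symmetry. exact H.
    - intro H. split.
      + rewrite F6, F5. symmetry. exact H.
      + rewrite F1b, F7. reflexivity. }
  assert (I3 : phi ** wl t' omega = wr omega t ** psi ->
               phi ** wr eta' W ** lu' W ** omega = wr omega t ** psi ** wr eta' V ** lu' V).
  { intro H. rewrite FP3, H. reflexivity. }
  split; [split|split; [split|split]].
  - exact I1.
  - rewrite I1. split.
    + intro H. split.
      * rewrite F1a, <- H. reflexivity.
      * rewrite <- F3. rewrite <- H. reflexivity.
    + intros [H1 H2].
      assert (E : Mphi mu phi ** wl t' (wr omega t ** psi ** wr eta' V ** lu' V) ** wr eta' V ** lu' V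
                  = wr omega t ** psi ** wr eta' V ** lu' V) by (rewrite <- F1a; exact H1).
      transitivity (muR mu W ** wr (wr omega t ** psi ** wr eta' V ** lu' V) t ** psi).
      { symmetry. exact F4. }
      transitivity (muR mu W ** wr (Mphi mu phi ** wl t' (wr omega t ** psi ** wr eta' V ** lu' V)
                                     ** wr eta' V ** lu' V) t ** psi).
      { rewrite E. reflexivity. }
      rewrite F8, F4. exact H2.
  - exact I2.
  - rewrite I2. split.
    + intro H. split.
      * rewrite <- H. rewrite <- F5. exact F7.
      * assert (G : Mphi mu phi ** wl t' (wr omega t ** psi) = phi ** wl t' omega ** muL mu' V).
        { rewrite <- FP1. rewrite H. rewrite FL1w. rewrite FP2b. reflexivity. }
        assert (G2 : Mphi mu phi ** wl t' (wr omega t ** psi ** wr eta' V ** lu' V)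
                     = Mphi mu phi ** wl t' (wr omega t ** psi) ** wl t' (wr eta' V ** lu' V))
          by (rewrite !wl_comp; ra; reflexivity).
        rewrite G2, G. rewrite <- (vA (phi ** wl t' omega)), Fa5, vidr. symmetry. exact H.
    + intros [C1 S].
      rewrite <- F5. rewrite <- C1. rewrite S. rewrite FP2a. reflexivity.
  - split.
    + intro H. split.
      * apply I2. rewrite <- H. rewrite <- F5. symmetry. apply (L3 Ha Hu1 HW).
      * apply I1. rewrite <- (I3 H). rewrite F5. symmetry. exact H.
    + intros [H2 H1]. apply I2 in H2. apply I1 in H1.
      rewrite H2. rewrite H1 at 1. rewrite F3. symmetry. exact H1.
  - exact I3.
Qed.
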